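(* Let $(\alpha_n)_{n\ge0}$ be complex numbers with $0<|\alpha_n|<1$ for all $n$, and let $\mu_{n,r,s}$ be as in the context. For all nonnegative integers $n,r,s$, \[ \mu_{n,r,s}=\sum_{p\in\mathrm{Sch}_{n,r,s}}\mathrm{wt}_S(p). \]
   Context: For a polynomial $f(z)=\sum_{k=0}^n a_kz^k$ of degree $n$, write $\overline{f}(z)=\sum_k\overline{a_k}z^k$ and $f^*(z)=z^n\overline{f}(1/z)$. Define monic $\Phi_n$ by $\Phi_0=1$, $\Phi_{n+1}(z)=z\Phi_n(z)-\overline{\alpha_n}\Phi_n^*(z)$. Let $\mathcal{L}$ be the unique linear functional on Laurent polynomials with $\mathcal{L}(1)=1$ and $\mathcal{L}(\Phi_m(z)\overline{\Phi_n}(1/z))=0$ for $m\neq n$; set $\langle f,g\rangle=\mathcal{L}(f(z)\overline{g}(1/z))$ and $\mu_{n,r,s}=\langle\Phi_s(z),z^n\Phi_r(z)\rangle/\langle\Phi_s,\Phi_s\rangle$. Set $\alpha_{-1}=-1$. A Schröder path is a lattice path in $\mathbb{Z}\times\mathbb{Z}_{\ge0}$ with steps $(1,1)$, $(1,0)$, $(0,-1)$; $\mathrm{Sch}_{n,r,s}$ is the set of Schröder paths from $(0,r)$ to $(n,s)$ that do not start with a vertical down-step $(0,-1)$. The weight $\mathrm{wt}_S(p)$ is the product of step weights: $(a,b)\to(a+1,b+1)$ has weight $1$; $(a,b)\to(a+1,b)$ has weight $-\overline{\alpha_{b-1}}/\overline{\alpha_b}$; $(a,b)\to(a,b-1)$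 has weight $\frac{\overline{\alpha_{b-2}}}{\overline{\alpha_{b-1}}}(1-|\alpha_{b-1}|^2)$. *)

(* Defs.v *)
From HB Require Import structures.
From mathcomp Require Import all_boot all_order all_algebra.
From mathcomp Require Import complex.
From mathcomp Require Import reals.
Set Implicit Arguments. Unset Strict Implicit. Unset Printing Implicit Defensive.
Import Order.TTheory GRing.Theory Num.Theory.
Local Open Scope ring_scope.

Section Defs.
Variable C : numClosedFieldType.

(* f^*(z) = z^deg f * conj(f)(1/z), with deg f = (size f).-1 *)
Definition pstar (f : {poly C}) : {poly C} :=
  \poly_(i < size f) (f`_((size f).-1 - i))^*.

Fixpoint Phi (a : nat -> C) (n : nat) : {poly C} :=
  match n with
  | 0 => 1
  | m.+1 => 'X * Phi a m - (a m)^* *: pstar (Phi a m)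
  end.

(* A linear functional L on Laurent polynomials is encoded by its moments
   c k = L(z^k), k : int.  Then <f,g> = L(f(z) conj(g)(1/z))
   = sum_{i,j} f_i conj(g_j) c (i - j). *)
Definition ip (c : int -> C) (f g : {poly C}) : C :=
  \sum_(i < size f) \sum_(j < size g) f`_i * (g`_j)^* * c (i%:Z - j%:Z).

Definition mu (a : nat -> C) (c : int -> C) (n r s : nat) : C :=
  ip c (Phi a s) ('X^n * Phi a r) / ip c (Phi a s) (Phi a s).

Definition aext (a : nat -> C) (k : int) : C :=
  match k with Posz m => a m | Negz _ => -1 end.

(* Schroeder steps: U = (1,1), H = (1,0), D = (0,-1) *)
Inductive step := U | H | D.

Fixpoint all_seqs (k : nat) : seq (seq step) :=
  match k with
  | 0 => [:: [::]]
  | k'.+1 => flatten [seq [:: U :: p; H :: p; D :: p] | p <- all_seqs k']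
  end.

Fixpoint valid_from (x y n s : nat) (p : seq step) : bool :=
  match p with
  | [::] => (x == n) && (y == s)
  | U :: q => valid_from x.+1 y.+1 n s q
  | H :: q => valid_from x.+1 y n s q
  | D :: q => (0 < y)%N && valid_from x y.-1 n s q
  end.

Definition is_sch (n r s : nat) (p : seq step) : bool :=
  valid_from 0 r n s p &&
  (match p with D :: _ => false | _ => true end).

Definition step_wt (a : nat -> C) (b : nat) (st : step) : C :=
  match st with
  | U => 1
  | H => - (aext a (b%:Z - 1))^* / (aext a b%:Z)^*
  | D => (aext a (b%:Z - 2))^* / (aext a (b%:Z - 1))^*
            * (1 - `|aext a (b%:Z - 1)| ^+ 2)
  end.

Definition step_next (b : nat) (st : step) : nat :=
  match st with U => b.+1 | H => b | D => b.-1 end.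

Fixpoint wtS (a : nat -> C) (b : nat) (p : seq step) : C :=
  match p with
  | [::] => 1
  | st :: q => step_wt a b st * wtS a (step_next b st) q
  end.

(* sum over Sch_{n,r,s}: every such path has length n + #D <= 2n + r,
   since #D = r + #U - s <= r + n; paths of each length k are enumerated
   (without repetition) by all_seqs k. *)
Definition sch_sum (a : nat -> C) (n r s : nat) : C :=
  \sum_(k < (2 * n + r).+1) \sum_(p <- all_seqs k | is_sch n r s p) wtS a r p.

End Defs.

(* Main.v *)
Require Import Defs.
From HB Require Import structures.
From mathcomp Require Import all_boot all_order all_algebra.
From mathcomp Require Import complex.
From mathcomp Require Import reals.
From mathcomp Require Import zify ring.
Import Order.TTheory GRing.Theory Num.Theory.
Local Open Scope ring_scope.
Set Implicit Arguments. Unset Strict Implicit. Unset Printing Implicit Defensive.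

Arguments step_wt : simpl never.

Definition Sk (C : numClosedFieldType) (a : nat -> C) (n s k x y : nat) : C :=
  \sum_(p <- all_seqs k | valid_from x y n s p) wtS a y p.

Lemma Sk0 (C : numClosedFieldType) (a : nat -> C) n s x y :
  Sk a n s 0 x y = ((x == n) && (y == s))%:R.
Proof.
rewrite /Sk /= big_mkcond big_seq1 /=.
by case: ((x == n) && (y == s)).
Qed.

Lemma SkS (C : numClosedFieldType) (a : nat -> C) n s k x y :
  Sk a n s k.+1 x y = Sk a n s k x.+1 y.+1 + step_wt a y H * Sk a n s k x.+1 y
     + (if (0 < y)%N then step_wt a y D * Sk a n s k x y.-1 else 0).
Proof.
rewrite /Sk /= big_flatten /= big_map.
rewrite [X in _ = X + _ + _]big_mkcond [X in _ = _ + _ * X + _]big_mkcond.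
rewrite mulr_sumr.
case: y => [|y] /=.
  rewrite addr0 -big_split /=; apply: eq_bigr => p _.
  rewrite big_mkcond !big_cons big_nil /= addr0 mul1r.
  by case: (valid_from _ _ _ _ _); case: (valid_from _ _ _ _ _); rewrite ?mulr0 ?addr0 ?add0r.
rewrite [X in _ = _ + _ * X]big_mkcond mulr_sumr -!big_split /=; apply: eq_bigr => p _.
rewrite big_mkcond !big_cons big_nil /= addr0 mul1r.
by case: (valid_from x.+1 y.+2 n s p); case: (valid_from x.+1 y.+1 n s p);
  case: (valid_from x y n s p); rewrite ?mulr0 ?addr0 ?add0r ?addrA.
Qed.

Lemma valid_gt x y n s p : (n < x)%N -> valid_from x y n s p = false.
Proof.
elim: p x y => [|st p IH] x y /= hx.
  by rewrite (gtn_eqF hx).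
case: st; rewrite ?IH //; try lia.
Qed.

Lemma Sk_gt (C : numClosedFieldType) (a : nat -> C) n s k x y :
  (n < x)%N -> Sk a n s k x y = 0.
Proof.
move=> hx; rewrite /Sk big1 // => p; by rewrite valid_gt.
Qed.

Lemma SkS0 (C : numClosedFieldType) (a : nat -> C) n s k x :
  Sk a n s k.+1 x 0 = Sk a n s k x.+1 1 + step_wt a 0 H * Sk a n s k x.+1 0.
Proof. by rewrite SkS addr0. Qed.

Lemma SkSS (C : numClosedFieldType) (a : nat -> C) n s k x y :
  Sk a n s k.+1 x y.+1 = Sk a n s k x.+1 y.+2 + step_wt a y.+1 H * Sk a n s k x.+1 y.+1
    + step_wt a y.+1 D * Sk a n s k x y.
Proof. by rewrite SkS. Qed.

Fixpoint Gof (C : numClosedFieldType) (a : nat -> C) (f : nat -> C) (y : nat) : C :=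
  match y with
  | 0 => f 0%N
  | y'.+1 => f y + step_wt a y D * Gof a f y'
  end.

Fixpoint schR (C : numClosedFieldType) (a : nat -> C) (n y s : nat) : C :=
  match n with
  | 0 => (y == s)%:R
  | n'.+1 => Gof a (fun t => schR a n' t s) y.+1
             + step_wt a y H * Gof a (fun t => schR a n' t s) y
  end.

Definition GR (C : numClosedFieldType) (a : nat -> C) (n y s : nat) : C :=
  Gof a (fun t => schR a n t s) y.

Lemma Sk_sum (C : numClosedFieldType) (a : nat -> C) n s K :
  forall x y, (x <= n)%N -> (2 * (n - x) + y < K)%N ->
  \sum_(k < K) Sk a n s k x y = GR a (n - x) y s.
Proof.
elim: K => [|K IH] x y hx hK; first by lia.
rewrite big_ord_recl Sk0.
case: y hK => [|y] hK.
  under eq_bigr => k _ do rewrite /bump /= SkS0.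
  rewrite big_split /= -mulr_sumr.
  case: (ltnP x n) => hxn.
  - have -> : (x == n) = false by lia.
    rewrite !IH //; try lia.
    have -> : (n - x = (n - x.+1).+1)%N by lia.
    by rewrite add0r.
  - have exn : x = n by lia.
    have Z : forall y', \sum_(k < K) Sk a n s k n.+1 y' = 0.
      by move=> y'; apply: big1 => k _; rewrite Sk_gt.
    by subst x; rewrite !Z mulr0 !addr0 subnn eqxx /=.
under eq_bigr => k _ do rewrite /bump /= SkSS.
rewrite !big_split /= -!mulr_sumr.
rewrite [X in _ + (_ + _ * X)]IH //; try lia.
case: (ltnP x n) => hxn.
- have -> : (x == n) = false by lia.
  rewrite !IH //; try lia.
  have -> : (n - x = (n - x.+1).+1)%N by lia.
  by rewrite add0r.
- have exn : x = n by lia.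
  have Z : forall y', \sum_(k < K) Sk a n s k n.+1 y' = 0.
    by move=> y'; apply: big1 => k _; rewrite Sk_gt.
  subst x; rewrite !Z mulr0 !add0r subnn eqxx /=.
  by [].
Qed.

Lemma sch_sumE (C : numClosedFieldType) (a : nat -> C) n r s :
  sch_sum a n r s = schR a n r s.
Proof.
rewrite /sch_sum big_ord_recl.
have E0 : \sum_(p <- all_seqs 0 | is_sch n r s p) wtS a r p = ((0 == n) && (r == s))%:R.
  by rewrite big_mkcond big_seq1 /is_sch /=; case: ((0 == n) && (r == s)); rewrite ?andbT.
have ES : forall k, \sum_(p <- all_seqs k.+1 | is_sch n r s p) wtS a r p =
    Sk a n s k 1 r.+1 + step_wt a r H * Sk a n s k 1 r.
  move=> k; rewrite /Sk /= big_flatten /= big_map.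
  rewrite [X in _ = X + _]big_mkcond [X in _ = _ + _ * X]big_mkcond mulr_sumr -big_split /=.
  apply: eq_bigr => p _.
  rewrite big_mkcond !big_cons big_nil /is_sch /= !andbT andbF addr0 mul1r.
  by case: (valid_from 1 r.+1 n s p); case: (valid_from 1 r n s p); rewrite ?mulr0 ?addr0 ?add0r.
rewrite E0; under eq_bigr => k _ do rewrite /bump /= ES.
rewrite big_split /= -mulr_sumr.
clear E0 ES; case: n => [|n].
  have Z : forall y', \sum_(k < (2 * 0 + r)) Sk a 0 s k 1 y' = 0.
    by move=> y'; apply: big1 => k _; rewrite Sk_gt.
  by rewrite !Z mulr0 !addr0 eqxx.
rewrite !Sk_sum //; try lia.
by rewrite add0r subn1.
Qed.

Lemma coef_pstar (C : numClosedFieldType) (p : {poly C}) i :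
  (pstar p)`_i = if (i < size p)%N then (p`_((size p).-1 - i))^* else 0.
Proof. by rewrite /pstar coef_poly. Qed.

Lemma size_Phi (C : numClosedFieldType) (a : nat -> C) n : size (Phi a n) = n.+1.
Proof.
elim: n => [|n IH] /=; first by rewrite size_poly1.
have nz : Phi a n != 0 by rewrite -size_poly_eq0 IH.
rewrite mulrC size_polyDl size_mulX ?IH //.
rewrite size_polyN; apply: (leq_ltn_trans (size_scale_leq _ _)).
by rewrite /pstar; apply: (leq_ltn_trans (size_poly _ _)); rewrite IH.
Qed.

Lemma PhiS (C : numClosedFieldType) (a : nat -> C) n :
  Phi a n.+1 = 'X * Phi a n - (a n)^* *: pstar (Phi a n).
Proof. by []. Qed.

Arguments Phi : simpl never.

Lemma ps_rec (C : numClosedFieldType) (a : nat -> C) n :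
  pstar (Phi a n.+1) = pstar (Phi a n) - a n *: ('X * Phi a n).
Proof.
apply/polyP => i.
rewrite coef_pstar size_Phi PhiS.
rewrite [in LHS]coefB [in LHS]coefZ [in LHS]coefXM [in LHS]coef_pstar size_Phi.
rewrite [in RHS]coefB [in RHS]coefZ [in RHS]coefXM [in RHS]coef_pstar size_Phi /=.
case: i => [|i].
  by rewrite !subn0 ltnn !mulr0 !subr0.
case: (ltnP i n.+1) => hi.
  case: (ltnP i n) => hin.
  - have -> : (n.+1 - i.+1 == 0)%N = false by lia.
    have -> : (n.+1 - i.+1 < n.+1)%N by lia.
    have -> : (n - (n.+1 - i.+1))%N = i by lia.
    have -> : (n.+1 - i.+1).-1 = (n - i.+1)%N by lia.
    have -> : (i.+1 < n.+2)%N by lia.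
    have -> : (i.+1 < n.+1)%N by lia.
    by rewrite /= rmorphB rmorphM /= !conjCK.
  - have -> : i = n by lia.
    have -> : (n.+1 < n.+2)%N by lia.
    by rewrite subnn /= ltnn subn0 rmorphB rmorphM /= !conjCK rmorph0 sub0r.
have -> : (i.+1 < n.+2)%N = false by lia.
have -> : (i.+1 < n.+1)%N = false by lia.
by rewrite /= nth_default ?size_Phi // mulr0 subr0.
Qed.

Definition Aprev (C : numClosedFieldType) (a : nat -> C) (y : nat) : C := aext a (y%:Z - 1).
Definition Psi (C : numClosedFieldType) (a : nat -> C) (y : nat) : {poly C} :=
  (- Aprev a y)^-1 *: pstar (Phi a y).

Lemma Aprev0 (C : numClosedFieldType) (a : nat -> C) : Aprev a 0 = -1.
Proof. by []. Qed.

Lemma AprevS (C : numClosedFieldType) (a : nat -> C) y : Aprev a y.+1 = a y.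
Proof. by rewrite /Aprev (_ : (y.+1%:Z - 1 = y%:Z)%R) //; lia. Qed.

Lemma Aprev_neq0 (C : numClosedFieldType) (a : nat -> C) y :
  (forall k, a k != 0) -> Aprev a y != 0.
Proof.
move=> ha; case: y => [|y]; first by rewrite Aprev0 oppr_eq0 oner_eq0.
by rewrite AprevS.
Qed.

Lemma conj_wH (C : numClosedFieldType) (a : nat -> C) y :
  (step_wt a y H)^* = - Aprev a y / a y.
Proof. by rewrite /step_wt rmorphM rmorphN fmorphV /= !conjCK. Qed.

Lemma conj_wD (C : numClosedFieldType) (a : nat -> C) y :
  (step_wt a y.+1 D)^* = Aprev a y / a y * (1 - a y * (a y)^*).
Proof.
rewrite /step_wt (_ : (y.+1%:Z - 2 = y%:Z - 1)%R); last by lia.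
rewrite (_ : (y.+1%:Z - 1 = y%:Z)%R); last by lia.
rewrite -normCK !rmorphM fmorphV rmorphB rmorph1 /= !conjCK.
rewrite rmorphXn /= geC0_conj //.
Qed.

Lemma Psi0 (C : numClosedFieldType) (a : nat -> C) : Psi a 0 = 1.
Proof.
rewrite /Psi Aprev0 opprK invr1 scale1r.
apply/polyP => i; rewrite coef_pstar size_Phi /= coef1.
by case: i => [|i] /=; rewrite coef1 ?rmorph1.
Qed.

Lemma I1 (C : numClosedFieldType) (a : nat -> C) y : (forall k, a k != 0) ->
  'X * Phi a y = Psi a y.+1 + (step_wt a y H)^* *: Psi a y.
Proof.
move=> ha; have hA := Aprev_neq0 y ha; have hy := ha y.
rewrite conj_wH /Psi ps_rec AprevS.
apply/polyP => i; rewrite !(coefD, coefB, coefZ, coefN).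
by field; rewrite ?oppr_eq0 ?hA ?hy.
Qed.

Lemma I2 (C : numClosedFieldType) (a : nat -> C) y : (forall k, a k != 0) ->
  Psi a y.+1 = Phi a y.+1 + (step_wt a y.+1 D)^* *: Psi a y.
Proof.
move=> ha; have hA := Aprev_neq0 y ha; have hy := ha y.
have XE : 'X * Phi a y = Phi a y.+1 + (a y)^* *: pstar (Phi a y) by rewrite PhiS subrK.
rewrite conj_wD /Psi ps_rec AprevS XE.
apply/polyP => i; rewrite !(coefD, coefB, coefZ, coefN).
by field; rewrite ?oppr_eq0 ?hA ?hy.
Qed.

Lemma exp_G (C : numClosedFieldType) (a : nat -> C) n : (forall k, a k != 0) ->
  (forall y B, (n + y < B)%N ->
     'X^n * Phi a y = \sum_(s < B) (schR a n y s)^* *: Phi a s) ->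
  forall y B, (n + y < B)%N ->
     'X^n * Psi a y = \sum_(s < B) (GR a n y s)^* *: Phi a s.
Proof.
move=> ha hS; elim=> [|y IH] B hB.
  by rewrite Psi0 (hS 0%N B hB).
rewrite I2 // mulrDr -scalerAr (hS y.+1 B hB) (IH B); last by lia.
rewrite scaler_sumr -big_split /=; apply: eq_bigr => s _.
by rewrite scalerA -scalerDl /GR /= rmorphD rmorphM.
Qed.

Lemma exp_sch (C : numClosedFieldType) (a : nat -> C) n : (forall k, a k != 0) ->
  forall y B, (n + y < B)%N ->
     'X^n * Phi a y = \sum_(s < B) (schR a n y s)^* *: Phi a s.
Proof.
move=> ha; elim: n => [|n IH] y B hB.
  rewrite expr0 mul1r (bigD1 (Ordinal hB)) //= eqxx conjC_nat scale1r big1 ?addr0 //.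
  move=> s hs; rewrite (_ : (y == s) = false) ?conjC_nat ?scale0r //.
  by apply/negbTE; move: hs; apply: contra => /eqP e; apply/eqP/val_inj.
rewrite exprS -mulrA mulrCA I1 // mulrDr.
rewrite (exp_G ha IH (y := y.+1) (B := B)); last by lia.
rewrite -scalerAr (exp_G ha IH (y := y) (B := B)); last by lia.
rewrite scaler_sumr -big_split /=; apply: eq_bigr => s _.
by rewrite scalerA -scalerDl /GR /= !rmorphD !rmorphM.
Qed.
Arguments Phi : simpl never.
Arguments step_wt : simpl never.

Definition ipN (C : numClosedFieldType) (c : int -> C) (N : nat) (f g : {poly C}) : C :=
  \sum_(i < N) \sum_(j < N) f`_i * (g`_j)^* * c (i%:Z - j%:Z).

Lemma sum_widen (C : numClosedFieldType) m N (F : nat -> C) :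
  (m <= N)%N -> (forall i, (m <= i)%N -> F i = 0) ->
  \sum_(i < m) F i = \sum_(i < N) F i.
Proof.
move=> hm hF; rewrite (big_ord_widen _ _ hm) big_mkcond /=.
apply: eq_bigr => i _; case: ifP => // /negbT; rewrite -leqNgt => h.
by rewrite hF.
Qed.

Lemma ipE (C : numClosedFieldType) (c : int -> C) N (f g : {poly C}) :
  (size f <= N)%N -> (size g <= N)%N -> ip c f g = ipN c N f g.
Proof.
move=> hf hg; rewrite /ip /ipN.
rewrite (sum_widen (N := N) (F := fun i => \sum_(j < size g) f`_i * (g`_j)^* * c (i%:Z - j%:Z))) //; last first.
  move=> i hi; apply: big1 => j _; by rewrite (nth_default 0 hi) !mul0r.
apply: eq_bigr => i _.
rewrite (sum_widen (N := N) (F := fun j => f`_i * (g`_j)^* * c (i%:Z - j%:Z))) //.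
by move=> j hj; rewrite (nth_default 0 hj) conjC0 mulr0 mul0r.
Qed.

Lemma ipN_Dl (C : numClosedFieldType) (c : int -> C) N (f g h : {poly C}) :
  ipN c N (f + g) h = ipN c N f h + ipN c N g h.
Proof.
rewrite /ipN -big_split /=; apply: eq_bigr => i _; rewrite -big_split /=; apply: eq_bigr => j _.
by rewrite coefD; ring.
Qed.

Lemma ipN_Zl (C : numClosedFieldType) (c : int -> C) N k (f h : {poly C}) :
  ipN c N (k *: f) h = k * ipN c N f h.
Proof.
rewrite /ipN mulr_sumr; apply: eq_bigr => i _; rewrite mulr_sumr; apply: eq_bigr => j _.
by rewrite coefZ; ring.
Qed.

Lemma ipN_Dr (C : numClosedFieldType) (c : int -> C) N (f g h : {poly C}) :
  ipN c N h (f + g) = ipN c N h f + ipN c N h g.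
Proof.
rewrite /ipN -big_split /=; apply: eq_bigr => i _; rewrite -big_split /=; apply: eq_bigr => j _.
by rewrite coefD rmorphD; ring.
Qed.

Lemma ipN_Zr (C : numClosedFieldType) (c : int -> C) N k (f h : {poly C}) :
  ipN c N h (k *: f) = k^* * ipN c N h f.
Proof.
rewrite /ipN mulr_sumr; apply: eq_bigr => i _; rewrite mulr_sumr; apply: eq_bigr => j _.
by rewrite coefZ rmorphM; ring.
Qed.

Lemma ipN_Bl (C : numClosedFieldType) (c : int -> C) N k (f g h : {poly C}) :
  ipN c N (f - k *: g) h = ipN c N f h - k * ipN c N g h.
Proof. by rewrite -scaleNr ipN_Dl ipN_Zl mulNr. Qed.

Lemma ipN_Br (C : numClosedFieldType) (c : int -> C) N k (f g h : {poly C}) :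
  ipN c N h (f - k *: g) = ipN c N h f - k^* * ipN c N h g.
Proof. by rewrite -scaleNr ipN_Dr ipN_Zr rmorphN mulNr. Qed.

Lemma ipN_sumr (C : numClosedFieldType) (c : int -> C) N B (k : nat -> C) (g : nat -> {poly C}) f :
  ipN c N f (\sum_(s < B) k s *: g s) = \sum_(s < B) (k s)^* * ipN c N f (g s).
Proof.
elim: B => [|B IH]; first by rewrite !big_ord0 /ipN big1 // => i _; rewrite big1 // => j _;
  rewrite coef0 conjC0 mulr0 mul0r.
by rewrite !big_ord_recr /= ipN_Dr ipN_Zr IH.
Qed.

Lemma ipN_suml (C : numClosedFieldType) (c : int -> C) N B (k : nat -> C) (g : nat -> {poly C}) f :
  ipN c N (\sum_(s < B) k s *: g s) f = \sum_(s < B) k s * ipN c N (g s) f.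
Proof.
elim: B => [|B IH]; first by rewrite !big_ord0 /ipN big1 // => i _; rewrite big1 // => j _;
  rewrite coef0 !mul0r.
by rewrite !big_ord_recr /= ipN_Dl ipN_Zl IH.
Qed.

Lemma ipN_shift (C : numClosedFieldType) (c : int -> C) N (f g : {poly C}) :
  ipN c N.+1 ('X * f) ('X * g) = ipN c N f g.
Proof.
rewrite /ipN big_ord_recl big1 ?add0r; last first.
  by move=> j _; rewrite coefXM /= !mul0r.
apply: eq_bigr => i _; rewrite big_ord_recl [(_ * g)`_ord0]coefXM /= conjC0 mulr0 mul0r add0r.
apply: eq_bigr => j _; rewrite !coefXM /=.
by rewrite (_ : ((bump 0 i)%:Z - (bump 0 j)%:Z = i%:Z - j%:Z)%R) //; rewrite /bump /=; lia.
Qed.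

Lemma ip_rev (C : numClosedFieldType) (c : int -> C) (f : {poly C}) :
  ip c (pstar f) (pstar f) = ip c f f.
Proof.
have A1 : forall n k, (k < n)%N -> (n.-1 - (n - k.+1) = k)%N by move=> *; lia.
have A2 : forall n k l, (k < n)%N -> (l < n)%N ->
  (((n - k.+1)%N)%:Z - ((n - l.+1)%N)%:Z = l%:Z - k%:Z)%R by move=> *; lia.
rewrite (@ipE _ _ (size f)) ?size_poly // (@ipE _ _ (size f)) //.
rewrite /ipN [RHS]exchange_big /= (reindex_inj rev_ord_inj) /=.
apply: eq_bigr => i _; rewrite (reindex_inj rev_ord_inj) /=.
apply: eq_bigr => j _; rewrite !coef_pstar /= !rev_ord_proof.
rewrite !A1 ?ltn_ord // A2 ?ltn_ord //.
by rewrite conjCK [_ * f`_j]mulrC.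
Qed.

Lemma size_sumPhi (C : numClosedFieldType) (a : nat -> C) B (k : nat -> C) :
  (size (\sum_(s < B) k s *: Phi a s)%R <= B)%N.
Proof.
apply/leq_sizeP => j hj; rewrite coef_sum big1 // => s _.
by rewrite coefZ nth_default ?mulr0 // size_Phi; have := ltn_ord s; lia.
Qed.

Lemma ipN_Phi (C : numClosedFieldType) (a : nat -> C) (c : int -> C) N m s :
  (m < N)%N -> (s < N)%N -> ipN c N (Phi a m) (Phi a s) = ip c (Phi a m) (Phi a s).
Proof. by move=> hm hs; rewrite (@ipE _ _ N) // size_Phi. Qed.

Lemma ip_Phi_sumr (C : numClosedFieldType) (a : nat -> C) (c : int -> C) B (k : nat -> C) m :
  (forall m k, m != k -> ip c (Phi a m) (Phi a k) = 0) ->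
  ip c (Phi a m) (\sum_(s < B) k s *: Phi a s) =
    if (m < B)%N then (k m)^* * ip c (Phi a m) (Phi a m) else 0.
Proof.
move=> horth.
rewrite (@ipE _ _ (m + B).+1) ?size_Phi; last 2 first.
- by lia.
- by apply: leq_trans (size_sumPhi _ _ _) _; lia.
rewrite ipN_sumr.
case: ifP => hm.
  rewrite (bigD1 (Ordinal hm)) //= big1 ?addr0.
    by rewrite ipN_Phi //; lia.
  move=> s hs; rewrite ipN_Phi ?horth ?mulr0 //; try (have := ltn_ord s; lia).
  by move: hs; apply: contra => /eqP e; apply/eqP/val_inj; rewrite /= e.
apply: big1 => s _; rewrite ipN_Phi ?horth ?mulr0 //; try (have := ltn_ord s; lia).
Qed.

Lemma ip_Phi_suml (C : numClosedFieldType) (a : nat -> C) (c : int -> C) B (k : nat -> C) m :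
  (forall m k, m != k -> ip c (Phi a m) (Phi a k) = 0) ->
  ip c (\sum_(s < B) k s *: Phi a s) (Phi a m) =
    if (m < B)%N then k m * ip c (Phi a m) (Phi a m) else 0.
Proof.
move=> horth.
rewrite (@ipE _ _ (m + B).+1) ?size_Phi; last 2 first.
- by apply: leq_trans (size_sumPhi _ _ _) _; lia.
- by lia.
rewrite ipN_suml.
case: ifP => hm.
  rewrite (bigD1 (Ordinal hm)) //= big1 ?addr0.
    by rewrite ipN_Phi //; lia.
  move=> s hs; rewrite ipN_Phi ?horth ?mulr0 //; try (have := ltn_ord s; lia).
apply: big1 => s _; rewrite ipN_Phi ?horth ?mulr0 //; try (have := ltn_ord s; lia).
Qed.
Arguments Phi : simpl never.
Arguments step_wt : simpl never.

Lemma Psi_sum (C : numClosedFieldType) (a : nat -> C) y : (forall k, a k != 0) ->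
  Psi a y = \sum_(s < y.+1) (GR a 0 y s)^* *: Phi a s.
Proof.
move=> ha; rewrite -(exp_G ha (exp_sch (n := 0) ha)) //.
by rewrite expr0 mul1r.
Qed.

Lemma ps_sum (C : numClosedFieldType) (a : nat -> C) y : (forall k, a k != 0) ->
  pstar (Phi a y) = \sum_(s < y.+1) (- Aprev a y * (GR a 0 y s)^*) *: Phi a s.
Proof.
move=> ha; have hA := Aprev_neq0 y ha.
under eq_bigr => s _ do rewrite -scalerA.
rewrite -scaler_sumr -Psi_sum // /Psi scalerA mulrV ?scale1r //.
by rewrite unitfE oppr_eq0.
Qed.

Lemma kappaS (C : numClosedFieldType) (a : nat -> C) (c : int -> C) y :
  (forall k, a k != 0) ->
  (forall m k, m != k -> ip c (Phi a m) (Phi a k) = 0) ->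
  ip c (Phi a y.+1) (Phi a y.+1) = (1 - a y * (a y)^*) * ip c (Phi a y) (Phi a y).
Proof.
move=> ha horth.
set P := pstar (Phi a y).
set X := 'X * Phi a y.
have sP : (size P <= y.+2)%N by apply: leq_trans (size_poly _ _) _; rewrite size_Phi.
have sX : (size X <= y.+2)%N by rewrite /X mulrC size_mulX ?size_Phi // -size_poly_eq0 size_Phi.
have sF : (size (Phi a y.+1) <= y.+2)%N by rewrite size_Phi.
have F1 : ip c (Phi a y.+1) P = 0 by rewrite /P ps_sum // (@ip_Phi_sumr _ a c _ (fun s => - Aprev a y * (GR a 0 y s)^*)) // ltnn.
have F2 : ip c P (Phi a y.+1) = 0 by rewrite /P ps_sum // (@ip_Phi_suml _ a c _ (fun s => - Aprev a y * (GR a 0 y s)^*)) // ltnn.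
have F3 : ip c X X = ip c (Phi a y) (Phi a y).
  rewrite (@ipE _ _ y.+2) // ipN_shift -(@ipE _ _ y.+1) // size_Phi //.
have F4 : ip c P P = ip c (Phi a y) (Phi a y) by rewrite ip_rev.
have XE : X = Phi a y.+1 + (a y)^* *: P by rewrite /X /P PhiS subrK.
have e1 : ip c (Phi a y.+1) (Phi a y.+1) = ip c (Phi a y.+1) X - a y * ip c (Phi a y.+1) P.
  by rewrite !(@ipE _ _ y.+2) // {2}PhiS ipN_Br conjCK.
have e2 : ip c (Phi a y.+1) X = ip c X X - (a y)^* * ip c P X.
  by rewrite !(@ipE _ _ y.+2) // {1}PhiS ipN_Bl.
have e3 : ip c P X = ip c P (Phi a y.+1) + a y * ip c P P.
  by rewrite !(@ipE _ _ y.+2) // {1}XE ipN_Dr ipN_Zr conjCK.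
rewrite e1 e2 e3 F1 F2 F3 F4; ring.
Qed.

Lemma kappa_neq0 (C : numClosedFieldType) (a : nat -> C) (c : int -> C) y :
  (forall k, 0 < `|a k| < 1) -> c 0 = 1 ->
  (forall m k, m != k -> ip c (Phi a m) (Phi a k) = 0) ->
  ip c (Phi a y) (Phi a y) != 0.
Proof.
move=> ha hc horth.
have ha' : forall k, a k != 0 by move=> k; have /andP[h _] := ha k; rewrite -normr_gt0.
elim: y => [|y IH].
  rewrite (_ : Phi a 0 = 1) // /ip size_poly1 !big_ord1 coef1 /= conjC1 !mul1r.
  by rewrite subrr hc oner_eq0.
rewrite kappaS // mulf_neq0 //.
have /andP[h0 h1] := ha y.
rewrite -normCK subr_eq0 eq_sym lt_eqF //.
by rewrite exprn_ilt1.
Qed.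

Lemma main_gen (C : numClosedFieldType) (a : nat -> C) (c : int -> C) :
  (forall k, 0 < `|a k| < 1) ->
  c 0 = 1 ->
  (forall m k, m != k -> ip c (Phi a m) (Phi a k) = 0) ->
  forall n r s : nat, mu a c n r s = sch_sum a n r s.
Proof.
move=> ha hc horth n r s.
have ha' : forall k, a k != 0 by move=> k; have /andP[h _] := ha k; rewrite -normr_gt0.
rewrite /mu (@exp_sch _ a n ha' r (n + r + s).+1); last by lia.
rewrite (@ip_Phi_sumr _ a c _ (fun t => (schR a n r t)^*)) //.
have -> : (s < (n + r + s).+1)%N by lia.
by rewrite conjCK mulfK ?kappa_neq0 // sch_sumE.
Qed.


Unset Implicit Arguments.

Theorem theorem3p10 (R : realType) (a : nat -> R[i]) (c : int -> R[i]) :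
  (forall k, 0 < `|a k| < 1) ->
  c 0 = 1 ->
  (forall m k, m != k -> ip c (Phi a m) (Phi a k) = 0) ->
  forall n r s : nat, mu a c n r s = sch_sum a n r s.
Proof. exact: main_gen. Qed.
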